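(* Under the standing setup with $\gamma>0$ and $s_1=\dots=s_n=1$ (so Hank's strategy set is $\{1\}$ and Georgia's is $[0,1]$), define $\hat m(1,1)=\chi\gamma+\beta-\beta\lambda-\lambda\gamma$, $\hat m(0,1)=\beta-\lambda\beta+(\lambda+\gamma+\chi-2)\gamma$ and $\hat w(1)=\frac{\lambda+\gamma-1+\sqrt{1-\beta+(\lambda+\gamma+\beta-2)\lambda-\chi\gamma}}{\gamma}$. Then the Nash equilibrium of the zero-sum game (Georgia minimizing $f$, Hank maximizing $f$) is $(0,1)$ if $\hat m(0,1)\ge0$; $(1,1)$ if $\hat m(1,1)\le0$; and $(\hat w(1),1)$ otherwise.
   Context: Standing setup. Fix $n\in\mathbb N$ and $W=[w_{ij}]\in\mathbb R^{n\times n}$ with $w_{ij}\ge0$, $w_{ii}=0$. Let $\|W\|_\infty=\max_i\sum_j|w_{ij}|$, $\|W\|_1=\max_j\sum_i|w_{ij}|$, let $\lambda$ be the spectral radius of $W$, and assume there is $c\in\mathbb R^n$ with all entries positive and $W^\top c=\lambda c$. Fix $\beta\ge\gamma\ge0$ with $1-\max\{\|W\|_\infty,\|W\|_1\}>\max\{2\beta,4\gamma\}$. Fix innate opinions $s\in[0,1]^n$, $\overline s=\max_is_i$, $\underline s=\min_is_i$; Georgia chooses $g\in[0,\underline s]$, Hank chooses $h\in[\overline s,1]$. Set $\widehat c_i=c_i/\sum_jc_j$, $\widehat s=\sum_i\widehat c_is_i$, $\chi=\sum_i\widehat c_is_i\sum_jw_{ij}$. Define $$f(g,h)=\frac{(1-2\beta+(h-g)\gamma)\widehat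 s-\chi+(h+g)\beta+(g^2-h^2)\gamma}{1-\lambda+(g-h)\gamma}\,c^\top\mathbf 1$$ (the centrality-weighted steady state of the opinion dynamics with source opinions $g,h$). *)

(* Defs.v *)
From HB Require Import structures.
From mathcomp Require Import all_boot all_order all_algebra.
Set Implicit Arguments. Unset Strict Implicit. Unset Printing Implicit Defensive.
Import Order.TTheory GRing.Theory Num.Theory.
Local Open Scope ring_scope.

Section Defs.
Variables (R : rcfType) (n : nat).

Definition norm_inf (W : 'M[R]_n) : R :=
  \big[Num.max/0]_(i < n) \sum_(j < n) `|W i j|.
Definition norm_1 (W : 'M[R]_n) : R :=
  \big[Num.max/0]_(j < n) \sum_(i < n) `|W i j|.

(* a + i b is a (complex) eigenvalue of the real matrix W, with eigenvector
   u + i v (u, v real, not both zero):  W (u + i v) = (a + i b)(u + i v). *)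
Definition complex_eigenvalue (W : 'M[R]_n) (a b : R) : Prop :=
  exists (u v : 'cV[R]_n), (u != 0 \/ v != 0) /\
    W *m u = a *: u - b *: v /\ W *m v = b *: u + a *: v.

Definition is_spectral_radius (W : 'M[R]_n) (lam : R) : Prop :=
  (exists a b, complex_eigenvalue W a b /\ lam = Num.sqrt (a ^+ 2 + b ^+ 2)) /\
  (forall a b, complex_eigenvalue W a b -> Num.sqrt (a ^+ 2 + b ^+ 2) <= lam).

Definition smax (s : 'I_n -> R) : R := \big[Num.max/0]_(i < n) s i.
Definition smin (s : 'I_n -> R) : R := \big[Num.min/1]_(i < n) s i.

Definition csum (c : 'cV[R]_n) : R := \sum_(i < n) c i 0.
Definition chat (c : 'cV[R]_n) (i : 'I_n) : R := c i 0 / csum c.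
Definition shat (c : 'cV[R]_n) (s : 'I_n -> R) : R :=
  \sum_(i < n) chat c i * s i.
Definition chi (W : 'M[R]_n) (c : 'cV[R]_n) (s : 'I_n -> R) : R :=
  \sum_(i < n) chat c i * s i * \sum_(j < n) W i j.

(* centrality-weighted steady state f(g,h); c^T 1 = csum c *)
Definition fval (W : 'M[R]_n) (c : 'cV[R]_n) (lam beta gamma : R)
  (s : 'I_n -> R) (g h : R) : R :=
  ((1 - 2 * beta + (h - g) * gamma) * shat c s - chi W c s + (h + g) * beta
     + (g ^+ 2 - h ^+ 2) * gamma)
  / (1 - lam + (g - h) * gamma) * csum c.

Definition is_nash (W : 'M[R]_n) (c : 'cV[R]_n) (lam beta gamma : R)
  (s : 'I_n -> R) (g h : R) : Prop :=
  [/\ 0 <= g <= smin s, smax s <= h <= 1,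
      (forall g', 0 <= g' <= smin s ->
         fval W c lam beta gamma s g h <= fval W c lam beta gamma s g' h) &
      (forall h', smax s <= h' <= 1 ->
         fval W c lam beta gamma s g h' <= fval W c lam beta gamma s g h)].

End Defs.

(* Main.v *)
Require Import Defs.
From HB Require Import structures.
From mathcomp Require Import all_boot all_order all_algebra.
From mathcomp Require Import ring lra.
Import Order.TTheory GRing.Theory Num.Theory.
Local Open Scope ring_scope.

Definition phiN {R : rcfType} (lam beta gamma g : R) :=
  (1 - beta - lam + g*(beta-gamma) + g^+2*gamma) / (1 - lam - gamma + g*gamma).

Lemma phi_diff (R : rcfType) (lam beta gamma g t : R) :
  1 - lam - gamma + g*gamma != 0 -> 1 - lam - gamma + t*gamma != 0 ->
  phiN lam beta gamma g - phiN lam beta gamma t =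
  (gamma * (g-t)^+2 * (1 - lam - gamma + t*gamma)
   + (gamma^+2*t^+2 + 2*(1-lam-gamma)*gamma*t + (beta-gamma)*(1-lam-gamma) - gamma*(1-beta-lam)) * (g-t))
  / ((1 - lam - gamma + g*gamma) * (1 - lam - gamma + t*gamma)).
Proof. move=> H1 H2; rewrite /phiN; field; apply/andP; split => //. Qed.

Lemma key (R : rcfType) (lam beta gamma : R) (hg: 0<gamma) (hbg: gamma <= beta)
  (hl0: 0 <= lam) (h1 : 2*beta < 1 - lam) (h2 : 4*gamma < 1-lam) :
  let m11 := lam * gamma + beta - beta * lam - lam * gamma in
  let m01 := beta - lam * beta + (lam + gamma + lam - 2) * gamma in
  let w1 := (lam + gamma - 1
             + Num.sqrt (1 - beta + (lam + gamma + beta - 2) * lam - lam * gamma))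
            / gamma in
  let t := if 0 <= m01 then 0 else if m11 <= 0 then 1 else w1 in
  0 <= t <= 1 /\ forall g, 0 <= g <= 1 -> g != t ->
     phiN lam beta gamma t < phiN lam beta gamma g.
Proof.
move=> m11 m01 w1 t.
have Dpos : forall g, 0 <= g -> 0 < 1 - lam - gamma + g*gamma.
  by move=> g hg0; nra.
have gen : forall t0 g, 0 <= t0 -> 0 <= g -> g != t0 ->
   0 < gamma * (g-t0)^+2 * (1 - lam - gamma + t0*gamma)
   + (gamma^+2*t0^+2 + 2*(1-lam-gamma)*gamma*t0 + (beta-gamma)*(1-lam-gamma) - gamma*(1-beta-lam)) * (g-t0) ->
   phiN lam beta gamma t0 < phiN lam beta gamma g.
  move=> t0 g ht0 hg0 hne hpos.
  rewrite -subr_gt0 phi_diff; last 2 first.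
  - by rewrite gt_eqF // Dpos.
  - by rewrite gt_eqF // Dpos.
  by apply: divr_gt0 => //; apply: mulr_gt0; apply: Dpos.
rewrite /t; case: ifP => hm01.
  split; first by rewrite lexx ler01.
  move=> g /andP[hg0 hg1] hne; apply: gen => //.
  have gp : 0 < g by rewrite lt_def hne hg0.
  rewrite /m01 in hm01.
  have -> : gamma * (g - 0) ^+ 2 * (1 - lam - gamma + 0 * gamma) +
    (gamma ^+ 2 * 0 ^+ 2 + 2 * (1 - lam - gamma) * gamma * 0 +
     (beta - gamma) * (1 - lam - gamma) - gamma * (1 - beta - lam)) * (g - 0)
    = g * (g * (gamma * (1 - lam - gamma)) + (beta - lam * beta + (lam + gamma + lam - 2) * gamma)) by ring.
  apply: mulr_gt0 => //; apply: ltr_pwDl => //; apply: mulr_gt0 => //; apply: mulr_gt0 => //; lra.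
case: ifP => hm11.
  exfalso; move: hm11; rewrite /m11 => hm11; nra.
have hm01' : m01 < 0 by rewrite ltNge hm01.
rewrite /m01 in hm01'.
set D := 1 - beta + (lam + gamma + beta - 2) * lam - lam * gamma.
have hD : 0 <= D by rewrite /D; nra.
set S := Num.sqrt D.
have S2 : S ^+ 2 = D by rewrite /S sqr_sqrtr.
have S0 : 0 <= S by rewrite /S sqrtr_ge0.
have Sa : 1 - lam - gamma < S.
  rewrite -(ltr_pXn2r (n:=2)) //; last by rewrite nnegrE; nra.
  rewrite S2 /D; nra.
have Sb : S < 1 - lam.
  rewrite -(ltr_pXn2r (n:=2)) //; last by rewrite nnegrE; nra.
  rewrite S2 /D; nra.
have ew : w1 * gamma = lam + gamma - 1 + S by rewrite /w1 divfK ?gt_eqF.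
have w0 : 0 < w1 by rewrite -(pmulr_lgt0 _ hg) ew; lra.
have w1' : w1 < 1 by rewrite -(ltr_pM2r hg) ew mul1r; lra.
split; first by rewrite ltW // ltW.
move=> g /andP[hg0 hg1] hne; apply: gen => //; first exact: ltW.
have Q0 : gamma^+2*w1^+2 + 2*(1-lam-gamma)*gamma*w1 + (beta-gamma)*(1-lam-gamma) - gamma*(1-beta-lam) = 0.
  have -> : gamma^+2*w1^+2 = (w1*gamma)^+2 by ring.
  have -> : 2*(1-lam-gamma)*gamma*w1 = 2*(1-lam-gamma)*(w1*gamma) by ring.
  rewrite ew; have -> : (lam + gamma - 1 + S)^+2 = (lam+gamma-1)^+2 + 2*(lam+gamma-1)*S + S^+2 by ring.
  rewrite S2 /D; ring.
rewrite Q0 mul0r addr0.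
have : g - w1 != 0 by rewrite subr_eq0.
move=> hz; have hsq : 0 < (g - w1)^+2 by rewrite lt_def sqr_ge0 andbT sqrf_eq0 hz.
apply: mulr_gt0; first exact: mulr_gt0.
apply: Dpos; exact: ltW.
Qed.

Lemma big_const1 (R : rcfType) (n : nat) (op : R -> R -> R) (idx : R) :
  (forall x, op 1 (op 1 x) = op 1 x) -> 
  \big[op/idx]_(i < n.+1) (1 : R) = op 1 idx.
Proof.
move=> H; rewrite big_const_ord; elim: n => [|n IH] //=.
by move: IH => /= ->; rewrite H.
Qed.

Theorem corollary5 (R : rcfType) (n : nat) (W : 'M[R]_n) (lam : R)
  (c : 'cV[R]_n) (beta gamma : R) (s : 'I_n -> R)
  (hW_nonneg : forall i j, 0 <= W i j)
  (hW_diag : forall i, W i i = 0)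
  (hlam : is_spectral_radius W lam)
  (hc_pos : forall i, 0 < c i 0)
  (hc_eig : W^T *m c = lam *: c)
  (hbg : gamma <= beta) (hgamma : 0 < gamma)
  (hnorm : Num.max (2 * beta) (4 * gamma) < 1 - Num.max (norm_inf W) (norm_1 W))
  (hs : forall i, s i = 1) :
  let x := chi W c s in
  let m11 := x * gamma + beta - beta * lam - lam * gamma in
  let m01 := beta - lam * beta + (lam + gamma + x - 2) * gamma in
  let w1 := (lam + gamma - 1
             + Num.sqrt (1 - beta + (lam + gamma + beta - 2) * lam - x * gamma))
            / gamma in
  forall g h : R,
    is_nash W c lam beta gamma s g h <->
    (g, h) = (if 0 <= m01 then 0 else if m11 <= 0 then 1 else w1, 1).
Proof.
case: n W c s hW_nonneg hW_diag hlam hc_pos hc_eig hnorm hs => [|n] W c s hW_nonneg hW_diag hlam hc_pos hc_eig hnorm hs.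
  exfalso; case: hlam => [[a [b [[u [v [huv _]]] _]]] _].
  by case: huv; rewrite flatmx0 eqxx.
have sminE : smin s = 1.
  rewrite /smin (eq_bigr (fun _ => 1)) ?big_const1 ?minxx //;
   try (by move=> i _; rewrite hs); try (by move=> x; rewrite minA minxx).
have smaxE : smax s = 1.
  rewrite /smax (eq_bigr (fun _ => 1)) ?big_const1 //;
   try (by move=> i _; rewrite hs); try (by move=> x; rewrite maxA maxxx);
   try (by rewrite maxC /Num.max ltr01).
set C := csum c.
have C0 : 0 < C.
  rewrite /C /csum big_ord_recl; apply: ltr_pwDl => //.
  by apply: sumr_ge0 => i _; apply: ltW.
have shatE : shat c s = 1.
  rewrite /shat /chat -/C; under eq_bigr do rewrite hs mulr1.
  by rewrite -mulr_suml divff ?gt_eqF.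
have E : \sum_(i < n.+1) c i 0 * \sum_(j < n.+1) W i j = lam * C.
  transitivity (\sum_(j < n.+1) (W^T *m c) j 0).
    under eq_bigr do rewrite mulr_sumr.
    rewrite exchange_big; apply: eq_bigr => j _; rewrite mxE.
    by apply: eq_bigr => i _; rewrite mxE mulrC.
  rewrite hc_eig /C /csum mulr_sumr; apply: eq_bigr => j _.
  by rewrite mxE.
have chiE : chi W c s = lam.
  rewrite /chi /chat -/C.
  under eq_bigr do rewrite hs mulr1 mulrAC.
  by rewrite -mulr_suml E mulfK ?gt_eqF.
have hl0 : 0 <= lam.
  rewrite -(pmulr_lge0 _ C0) -E; apply: sumr_ge0 => i _.
  by apply: mulr_ge0; [apply: ltW | apply: sumr_ge0].
have hlM : lam <= norm_inf W.
  rewrite -(ler_pM2r C0) -E /C /csum mulr_sumr.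
  apply: ler_sum => i _; rewrite mulrC; apply: ler_wpM2r; first exact: ltW.
  rewrite /norm_inf.
  apply: le_trans (le_bigmax _ (fun i => \sum_(j < n.+1) `|W i j|) i).
  by rewrite le_eqVlt; apply/orP; left; apply/eqP; apply: eq_bigr => j _; rewrite ger0_norm.
have le_maxl : forall a b : R, a <= Num.max a b by move=> a b; rewrite le_max lexx.
have le_maxr : forall a b : R, b <= Num.max a b by move=> a b; rewrite le_max lexx orbT.
have h1 : 2 * beta < 1 - lam.
  apply: le_lt_trans (le_maxl (2*beta) (4*gamma)) _.
  apply: lt_le_trans hnorm _; rewrite lerD2l lerN2.
  exact: le_trans hlM (le_maxl _ _).
have h2 : 4 * gamma < 1 - lam.
  apply: le_lt_trans (le_maxr (2*beta) (4*gamma)) _.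
  apply: lt_le_trans hnorm _; rewrite lerD2l lerN2.
  exact: le_trans hlM (le_maxl _ _).
have fvalE : forall g, fval W c lam beta gamma s g 1 = phiN lam beta gamma g * C.
  move=> g; rewrite /fval shatE chiE /phiN -/C.
  congr (_ / _ * _); ring.
move=> x m11 m01 w1; rewrite {}/w1 {}/m11 {}/m01 {}/x chiE.
have [Kt Kmin] := @key R lam beta gamma hgamma hbg hl0 h1 h2.
move: Kt Kmin.
set t := (if _ then _ else _) => Kt Kmin g h.
rewrite /is_nash sminE smaxE; split.
  case=> /andP[g0 g1] /andP[h1' h1''] Hmin _.
  have h1e : h = 1 by apply/eqP; rewrite eq_le h1' h1''.
  subst h; congr (_, _).
  apply/eqP; apply/negPn/negP => hne.
  have := Hmin t Kt; rewrite !fvalE ler_pM2r //.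
  by rewrite leNgt Kmin // g0 g1.
case=> -> ->; split => //.
- by rewrite lexx.
- move=> g' hg'; rewrite !fvalE ler_pM2r //.
  have [-> | hne] := eqVneq g' t; first exact: lexx.
  exact: ltW (Kmin g' hg' hne).
- move=> h' /andP[a b]; have -> : h' = 1 by apply/eqP; rewrite eq_le a b.
  exact: lexx.
Qed.
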